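(* Let ALG be an online algorithm for the online stochastic rewards problem and OPT a deterministic optimal fully offline policy. Suppose non-negative numbers $\lambda^\omega_t$ ($t\in T$) and $\theta^\omega_i$ ($i\in I$), defined for every sample path $\omega$, and constants $\alpha,\beta>0$ satisfy $$E_{\omega_i}\Big[\theta^\omega_i+\sum_{t:\,O^\omega_t=i}\lambda^\omega_t\,\Big|\,\omega_{-i}\Big]\ \ge\ \alpha\,E_{\omega_i}\big[\mathrm{OPT}^\omega_i\,\big|\,\omega_{-i}\big]\quad\text{for all } i\in I\text{ and all }\omega_{-i},$$ $$\beta\,\mathrm{ALG}\ \ge\ \sum_iE_\omega[\theta^\omega_i]+\sum_tE_\omega[\lambda^\omega_t].$$ Then $\mathrm{ALG}\ge\frac{\alpha}{\beta}\mathrm{OPT}$.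
   Context: Online stochastic rewards problem: bipartite graph $G=(I,T,E)$, resources $i\in I$ with rewards $r_i>0$ and unit capacity, arrivals $t\in T$ with edge probabilities $p_{it}$; each arrival is offered at most one available neighbour; an offer succeeds independently with probability $p_{it}$, earning $r_i$ and making $i$ unavailable. A fully offline policy knows the instance in advance, may adaptively choose the order in which to process arrivals, offers each arrival at most one available resource, and learns each outcome only after the offer. A sample path $\omega$ fixes an outcome $\mathbb{1}^\omega(i,t)\in\{0,1\}$ (independent Bernoulli($p_{it}$)) for every edge, and both ALG and OPT are run on the same $\omega$ (an offer of $i$ to $t$ succeeds iff $\mathbb{1}^\omega(i,t)=1$). $\omega_i$ denotes the outcomes of edges incident to $i$, $\omega_{-i}$ the outcomes of all other edges; $E_{\omega_i}[\cdot\mid\omega_{-i}]$ averages over $\omega_i$ only. $O^\omega_t$ is the resource offered to $t$ by OPT on $\omega$ ($\emptyset$ if none). $\mathrm{OPT}^\omega_i=r_i$ if OPT successfully matches $i$ on $\omega$ and $0$ otherwise. ALG and OPT also denote the respective expected total rewards. *)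

(* Defs.v *)
From HB Require Import structures.
From mathcomp Require Import all_boot all_order all_algebra.
Set Implicit Arguments. Unset Strict Implicit. Unset Printing Implicit Defensive.
Import Order.TTheory GRing.Theory Num.Theory.
Local Open Scope ring_scope.

Section Model.
Variables (I T : finType) (E : I -> T -> bool).

Definition edge : finType := {x : I * T | E x.1 x.2}.

(* a sample spath fixes an outcome for every edge *)
Definition spath := {ffun edge -> bool}.

Definition outcome (w : spath) (i : I) (t : T) : bool :=
  if (insub (i, t) : option edge) is Some e then w e else false.

(* history: processed arrivals, with the resource offered (if any) and outcome *)
Definition hist := seq (T * option I * bool).

Definition matched (h : hist) (i : I) : bool :=
  has (fun x => (x.1.2 == Some i) && x.2) h.

Definition processed (h : hist) (t : T) : bool :=
  has (fun x => x.1.1 == t) h.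

Definition process (w : spath) (h : hist) (t : T) (o : option I) : hist :=
  let o' := if o is Some i then
              (if E i t && ~~ matched h i then Some i else None) else None in
  rcons h (t, o', if o' is Some i then outcome w i t else false).

(* deterministic fully offline adaptive policy: given the history, choose the
   next arrival to process and the offer for it (None = stop) *)
Definition offpol := hist -> option (T * option I).

Definition off_step (P : offpol) (w : spath) (h : hist) : hist :=
  match P h with
  | None => h
  | Some (t, o) => if processed h t then h else process w h t o
  end.

Definition off_run (P : offpol) (w : spath) : hist := iter #|T| (off_step P w) [::].

(* deterministic online policy: arrivals come in the order enum T; the offer to
   t depends only on the history of the previous arrivals *)
Definition onpol := T -> hist -> option I.

Definition on_run (A : onpol) (w : spath) : hist :=
  foldl (fun h t => process w h t (A t h)) [::] (enum T).

Definition offered (h : hist) (t : T) : option I :=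
  head None [seq x.1.2 | x <- h & x.1.1 == t].

Variable R : realFieldType.
Variables (r : I -> R) (p : I -> T -> R).

Definition reward (h : hist) : R := \sum_i (if matched h i then r i else 0).

Definition pw (e : edge) (b : bool) : R :=
  if b then p (val e).1 (val e).2 else 1 - p (val e).1 (val e).2.

Definition Pr (w : spath) : R := \prod_e pw e (w e).

Definition Expect (f : spath -> R) : R := \sum_w Pr w * f w.

(* E_{w_i}[ f | w_{-i} ] : average over the outcomes of edges incident to i,
   the other outcomes being those of w *)
Definition condE (i : I) (f : spath -> R) (w : spath) : R :=
  \sum_(w' : spath | [forall e : edge, ((val e).1 != i) ==> (w' e == w e)])
     (\prod_(e : edge | (val e).1 == i) pw e (w' e)) * f w'.

(* expected reward of a randomized online algorithm, a finite mixture of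
   deterministic online policies *)
Definition ALGval (alg : seq (R * onpol)) : R :=
  \sum_(x <- alg) x.1 * Expect (fun w => reward (on_run x.2 w)).

Definition OPTval (P : offpol) : R := Expect (fun w => reward (off_run P w)).

Definition OPTi (P : offpol) (w : spath) (i : I) : R :=
  if matched (off_run P w) i then r i else 0.

End Model.

Arguments Expect {I T} E {R} p f.
Arguments condE {I T} E {R} p i f w.
Arguments OPTi {I T} E {R} r P w i.
Arguments off_run {I T} E P w.
Arguments on_run {I T} E A w.

(* Main.v *)
Require Import Defs.
From HB Require Import structures.
From mathcomp Require Import all_boot all_order all_algebra.
From mathcomp Require Import ring.
Import Order.TTheory GRing.Theory Num.Theory.
Local Open Scope ring_scope.

Section Aux.
Variables (R : realFieldType) (I T : finType) (E : I -> T -> bool) (p : I -> T -> R).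

Definition agree (i : I) (w w' : spath E) : bool :=
  [forall e : edge E, ((val e).1 != i) ==> (w' e == w e)].

Lemma agreeC i w w' : agree i w w' = agree i w' w.
Proof.
by rewrite /agree; apply: eq_forallb => e; rewrite [w' e == _]eq_sym.
Qed.

Lemma sum_one i w' :
  \sum_(w | agree i w' w) \prod_(e : edge E | (val e).1 == i) pw p e (w e) = 1.
Proof.
pose Q := fun (e : edge E) (b : bool) => if (val e).1 == i then true else b == w' e.
pose F := fun (e : edge E) (b : bool) => if (val e).1 == i then pw p e b else 1.
transitivity (\prod_e \sum_(j | Q e j) F e j); last first.
  apply: big1 => e _; rewrite /Q /F; case: ((val e).1 == i).
    rewrite big_mkcond big_bool /= /pw; ring.
  by rewrite (big_pred1 (w' e)) // => b; rewrite eq_sym.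
rewrite (bigA_distr_big_dep Q F); apply: eq_big.
  move=> w /=; apply/forallP/familyP => H e; have := H e; rewrite /Q /in_mem /=;
  by case: ifP.
move=> w _; rewrite [RHS](bigID (fun e : edge E => (val e).1 == i)) /=.
rewrite [X in _ * X]big1 ?mulr1; last by move=> e /negbTE; rewrite /F => ->.
by apply: eq_bigr => e He; rewrite /F He.
Qed.

Lemma tower i (g : spath E -> R) :
  Expect E p (condE E p i g) = Expect E p g.
Proof.
rewrite /Expect /condE.
under eq_bigr => w _ do rewrite big_distrr /= (big_mkcond (fun w' => _)) /=.
rewrite exchange_big /=; apply: eq_bigr => w' _.
rewrite -big_mkcond /=.
rewrite (eq_bigl (fun w => agree i w' w)); last first.
  by move=> w; rewrite agreeC.
have HP : forall w, agree i w' w -> Pr p w =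
   (\prod_(e : edge E | (val e).1 == i) pw p e (w e)) *
   \prod_(e : edge E | (val e).1 != i) pw p e (w' e).
  move=> w /forallP Hw; rewrite /Pr (bigID (fun e : edge E => (val e).1 == i)) /=.
  congr (_ * _); apply: eq_bigr => e He; have := Hw e; rewrite He /= => /eqP ->.
  by [].
under eq_bigr => w Hw do rewrite (HP w Hw).
have -> : \sum_(w | agree i w' w)
   (\prod_(e : edge E | (val e).1 == i) pw p e (w e) *
    \prod_(e : edge E | (val e).1 != i) pw p e (w' e) *
   (\prod_(e : edge E | (val e).1 == i) pw p e (w' e) * g w')) =
   (\sum_(w | agree i w' w) \prod_(e : edge E | (val e).1 == i) pw p e (w e)) *
   (\prod_(e : edge E | (val e).1 != i) pw p e (w' e) *
   (\prod_(e : edge E | (val e).1 == i) pw p e (w' e) * g w')).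
  by rewrite big_distrl /=; apply: eq_bigr => w _; rewrite !mulrA.
rewrite sum_one mul1r /Pr [X in _ = X * _](bigID (fun e : edge E => (val e).1 == i)) /=.
rewrite mulrA [X in X * _]mulrC; ring.
Qed.

Lemma Pr_ge0 (hp : forall i t, 0 <= p i t <= 1) (w : spath E) : 0 <= Pr p w.
Proof.
apply: prodr_ge0 => e _; rewrite /pw; case: (w e);
  have /andP[h0 h1] := hp (val e).1 (val e).2; rewrite ?subr_ge0 //.
Qed.

Lemma Expect_le (hp : forall i t, 0 <= p i t <= 1) f g :
  (forall w, f w <= g w) -> Expect E p f <= Expect E p g.
Proof.
move=> H; apply: ler_sum => w _; apply: ler_wpM2l; [exact: Pr_ge0|exact: H].
Qed.

Lemma ExpectD f g : Expect E p (fun w => f w + g w) = Expect E p f + Expect E p g.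
Proof. by rewrite /Expect -big_split /=; apply: eq_bigr => w _; rewrite mulrDr. Qed.

Lemma ExpectZ c f : Expect E p (fun w => c * f w) = c * Expect E p f.
Proof. by rewrite /Expect mulr_sumr; apply: eq_bigr => w _; rewrite mulrCA. Qed.

Lemma Expect_sum (J : finType) (f : spath E -> J -> R) :
  Expect E p (fun w => \sum_j f w j) = \sum_j Expect E p (fun w => f w j).
Proof.
rewrite /Expect exchange_big /=; apply: eq_bigr => w _; by rewrite mulr_sumr.
Qed.
End Aux.

Theorem lemma5 (R : realFieldType) (I T : finType) (E : I -> T -> bool)
  (r : I -> R) (p : I -> T -> R)
  (hr : forall i, 0 < r i) (hp : forall i t, 0 <= p i t <= 1)
  (alg : seq (R * onpol I T))
  (halg0 : all (fun x => 0 <= x.1) alg) (halg1 : \sum_(x <- alg) x.1 = 1)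
  (OPT : offpol I T)
  (hopt : forall P : offpol I T, OPTval E r p P <= OPTval E r p OPT)
  (lam : spath E -> T -> R) (theta : spath E -> I -> R) (alpha beta : R)
  (hlam : forall w t, 0 <= lam w t) (htheta : forall w i, 0 <= theta w i)
  (halpha : 0 < alpha) (hbeta : 0 < beta)
  (h1 : forall (i : I) (w : spath E),
      alpha * condE E p i (fun w' => OPTi E r OPT w' i) w <=
      condE E p i (fun w' => theta w' i +
        \sum_(t : T | offered (off_run E OPT w') t == Some i) lam w' t) w)
  (h2 : \sum_i Expect E p (fun w => theta w i) + \sum_t Expect E p (fun w => lam w t)
        <= beta * ALGval E r p alg) :
  alpha / beta * OPTval E r p OPT <= ALGval E r p alg.
Proof.
rewrite mulrAC ler_pdivrMr // [X in _ <= X]mulrC; apply: le_trans h2.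
have -> : OPTval E r p OPT = \sum_i Expect E p (fun w => OPTi E r OPT w i).
  by rewrite /OPTval -Expect_sum.
rewrite mulr_sumr.
apply: (@le_trans _ _ (\sum_i Expect E p (fun w => theta w i +
        \sum_(t : T | offered (off_run E OPT w) t == Some i) lam w t))).
  apply: ler_sum => i _.
  rewrite -(@tower _ _ _ _ p i) -[X in _ <= X](@tower _ _ _ _ p i) -ExpectZ.
  by apply: Expect_le => // w; apply: h1.
under eq_bigr => i _ do rewrite ExpectD.
rewrite big_split /= lerD2l -!Expect_sum.
apply: Expect_le => // w.
rewrite (exchange_big_dep predT) //=; apply: ler_sum => t _.
case Ho: (offered (off_run E OPT w) t) => [j|].
  by rewrite (big_pred1 j) // => i; rewrite eq_sym; apply/eqP/eqP => [[]|->].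
by rewrite big_pred0.
Qed.
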